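(* In the setting described in the context, the society-wide game has a unique Bayesian equilibrium $x^{soc}$ and the friend game has a unique Bayesian equilibrium $x^{friend}$, given for all $(\theta_i,d_i)\in\Theta\times D$ by $$x^{soc}(\theta_i,d_i)=\frac{\theta_i}{c}+\frac{a\,d_i\,\mathrm{E}[\theta]}{c\,(c-a\,\mathrm{E}[d])},\qquad x^{friend}(\theta_i,d_i)=\frac{\theta_i}{c}+\frac{a\,d_i\,\widetilde{\mathrm{E}}[\theta]}{c\,(c-a\,\widetilde{\mathrm{E}}[d])}.$$
   Context: Fix an integer $n\ge 2$ (number of agents), parameters $a>0$, $c>0$, $\phi\in\mathbb{R}$, and a compact set $\Theta\subset[0,\infty)$ of types. Let $D=\{1,\dots,n-1\}$ (possible degrees). Let $P$ be a probability distribution on $\Theta\times D$, the joint distribution of the type $\theta$ and degree $d$ of a generic potential neighbor, the same for every agent; $\mathrm{E}$ denotes expectation under $P$. The neighbor distribution $\widetilde P$ on $\Theta\times D$ is defined by $\widetilde P(A\times\{d\})=\frac{d}{\mathrm{E}[d]}P(A\times\{d\})$, with expectation $\widetilde{\mathrm{E}}$, so $\widetilde{\mathrm{E}}[h(\theta,d)]=\mathrm{E}[d\,h(\theta,d)]/\mathrm{E}[d]$. Standing assumptions: $P(\theta>0)>0$ and $c>a\,\widetilde{\mathrm{E}}[d]$. A strategy is a bounded measurable function $x:\Theta\times D\to[0,\infty)$, used by all agents. If the others use $x$, an agent of type $\theta_i$ and degree $d_i$ choosing action $y\ge 0$ gets in the society-wide game $EU^{soc}(y;\theta_i,d_i;x)=\theta_i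 y+a\,y\,d_i\,\mathrm{E}[x(\theta,d)]-\frac{c}{2}y^2+\phi(n-1)\mathrm{E}[x(\theta,d)]$, and in the friend game $EU^{friend}(y;\theta_i,d_i;x)=\theta_i y+a\,y\,d_i\,\widetilde{\mathrm{E}}[x(\theta,d)]-\frac{c}{2}y^2+\phi(n-1)\mathrm{E}[x(\theta,d)]$. A Bayesian equilibrium of a game is a strategy $x$ such that for every $(\theta_i,d_i)\in\Theta\times D$, $y=x(\theta_i,d_i)$ maximizes the agent's payoff in that game over $y\ge 0$, given that the others use $x$. *)

(* Defs.v *)
From HB Require Import structures.
From mathcomp Require Import all_boot all_order all_algebra.
From mathcomp Require Import all_classical all_reals all_analysis.
Set Implicit Arguments. Unset Strict Implicit. Unset Printing Implicit Defensive.
Import Order.TTheory GRing.Theory Num.Theory.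
Import numFieldNormedType.Exports.
Local Open Scope classical_set_scope.
Local Open Scope ring_scope.

Definition degs (n : nat) : set nat := [set d | (1 <= d <= n.-1)%N].

Section Model.
Context {R : realType}.
Implicit Types (P : probability (R * nat)%type R) (Theta : set R).

(* E[h] for h defined on Theta x D, the expectation under P
   (P is assumed concentrated on Theta x D) *)
Definition Ex P Theta n (h : R * nat -> R) : R :=
  fine (\int[P]_(z in Theta `*` degs n) (h z)%:E).

(* neighbor expectation: tilde E[h] = E[d h] / E[d] *)
Definition Ext P Theta n (h : R * nat -> R) : R :=
  Ex P Theta n (fun z => z.2%:R * h z) / Ex P Theta n (fun z => z.2%:R).

Definition is_strategy Theta n (x : R * nat -> R) : Prop :=
  [/\ measurable_fun (Theta `*` degs n) x,
      (exists M : R, forall z, (Theta `*` degs n) z -> `|x z| <= M) &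
      (forall z, (Theta `*` degs n) z -> 0 <= x z)].

Definition EU_soc P Theta n (a c phi : R) (y th : R) (d : nat) (x : R * nat -> R) : R :=
  th * y + a * y * d%:R * Ex P Theta n x - c / 2 * y ^+ 2
  + phi * (n.-1)%:R * Ex P Theta n x.

Definition EU_friend P Theta n (a c phi : R) (y th : R) (d : nat) (x : R * nat -> R) : R :=
  th * y + a * y * d%:R * Ext P Theta n x - c / 2 * y ^+ 2
  + phi * (n.-1)%:R * Ex P Theta n x.

Definition is_equilibrium Theta n
  (EU : R -> R -> nat -> (R * nat -> R) -> R) (x : R * nat -> R) : Prop :=
  is_strategy Theta n x /\
  forall th d, Theta th -> degs n d ->
    forall y, 0 <= y -> EU y th d x <= EU (x (th, d)) th d x.

Definition soc_equilibrium P Theta n a c phi x :=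
  is_equilibrium Theta n (fun y th d x => EU_soc P Theta n a c phi y th d x) x.
Definition friend_equilibrium P Theta n a c phi x :=
  is_equilibrium Theta n (fun y th d x => EU_friend P Theta n a c phi y th d x) x.

End Model.

(* Main.v *)
Require Import Defs.
From HB Require Import structures.
From mathcomp Require Import all_boot all_order all_algebra.
From mathcomp Require Import all_classical all_reals all_analysis.
From mathcomp Require Import ring lra.
Import Order.TTheory GRing.Theory Num.Theory.
Import numFieldNormedType.Exports.
Local Open Scope classical_set_scope.
Local Open Scope ring_scope.

Lemma mnat (R : realType) : measurable_fun [set: nat] (fun k : nat => (k%:R : R)).
Proof. by []. Qed.
Lemma bnd (R : realType) (T : Type) (A : set T) (f : T -> R) (M : R) :
  (forall z, A z -> `|f z| <= M) -> [bounded f x | x in A].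
Proof.
move=> H; exists M; split; first exact: num_real.
move=> y My z Az; exact: (le_trans (H z Az) (ltW My)).
Qed.
Lemma cpt_bnd (R : realType) (A : set R) : compact A -> exists M, forall x, A x -> `|x| <= M.
Proof.
move/compact_bounded => [M [_ HM]]; exists (M+1) => x Ax; apply: (HM (M+1)) => //.
by rewrite ltrDl.
Qed.

Definition good (R : realType) (D0 : set (R * nat)) (f : R * nat -> R) :=
  measurable_fun D0 f /\ exists M, forall z, D0 z -> `|f z| <= M.
Arguments good {R}.

Lemma goodD (R : realType) D0 (f g : R * nat -> R) : good D0 f -> good D0 g ->
  good D0 (fun z => f z + g z).
Proof.
move=> [mf [M HM]] [mg [N HN]]; split; first exact: measurable_realfun.measurable_funD.
exists (M + N) => z Dz; apply: (le_trans (ler_normD _ _)); apply: lerD; [exact: HM | exact: HN].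
Qed.

Lemma goodM (R : realType) D0 (f g : R * nat -> R) : good D0 f -> good D0 g ->
  good D0 (fun z => f z * g z).
Proof.
move=> [mf [M HM]] [mg [N HN]]; split; first exact: measurable_realfun.measurable_funM.
exists (M * N) => z Dz; rewrite normrM; apply: ler_pM => //; [exact: HM | exact: HN].
Qed.

Lemma goodC (R : realType) D0 (r : R) : good D0 (fun _ => r).
Proof. split; first exact: measurable_cst. by exists `|r|. Qed.

Lemma goodZ (R : realType) D0 (f : R * nat -> R) r : good D0 f -> good D0 (fun z => r * f z).
Proof. by move=> gf; apply: goodM => //; apply: goodC. Qed.

Lemma good1 (R : realType) (Theta : set R) n : measurable Theta -> compact Theta ->
  good (Theta `*` degs n) (fun z => z.1).
Proof.
move=> mT cT; split.
  apply: (measurable_funS measurableT) => //; exact: measurable_fst.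
have [M HM] := @cpt_bnd R Theta cT; exists M => z [] Tz _; exact: HM.
Qed.

Lemma good2 (R : realType) (Theta : set R) n : measurable Theta ->
  good (Theta `*` degs n) (fun z => (z.2%:R : R)).
Proof.
move=> mT; split.
  apply: (measurable_funS measurableT) => //.
  exact: (measurableT_comp (mnat R) measurable_snd).
exists (n%:R) => z [] _ /andP[_ h]; rewrite ger0_norm // ler_nat.
exact: (leq_trans h (leq_pred n)).
Qed.

Lemma integ (R : realType) (Theta : set R) n (P : probability (R * nat)%type R) f :
  measurable (Theta `*` degs n) -> good (Theta `*` degs n) f ->
  P.-integrable (Theta `*` degs n) (EFin \o f).
Proof.
move=> mD [mf [M HM]]; apply: measurable_bounded_integrable => //.
  by apply: (le_lt_trans (probability_le1 P mD)); rewrite ltry.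
apply: bnd; exact: HM.
Qed.
Arguments integ {R Theta n} P {f}.

Lemma Ex_add (R : realType) (Theta : set R) n (P : probability (R * nat)%type R) f g :
  measurable (Theta `*` degs n) -> good (Theta `*` degs n) f -> good (Theta `*` degs n) g ->
  Ex P Theta n (fun z => f z + g z) = Ex P Theta n f + Ex P Theta n g.
Proof.
move=> mD gf gg; exact: (RintegralD mD (integ P mD gf) (integ P mD gg)).
Qed.

Lemma Ex_scale (R : realType) (Theta : set R) n (P : probability (R * nat)%type R) f r :
  measurable (Theta `*` degs n) -> good (Theta `*` degs n) f ->
  Ex P Theta n (fun z => r * f z) = r * Ex P Theta n f.
Proof.
move=> mD gf; exact: (RintegralZl r mD (integ P mD gf)).
Qed.

Lemma Ex_cst (R : realType) (Theta : set R) n (P : probability (R * nat)%type R) r :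
  measurable (Theta `*` degs n) -> P (Theta `*` degs n) = 1%E ->
  Ex P Theta n (fun _ => r) = r.
Proof.
move=> mD P1; rewrite /Ex; have := Rintegral_cst P mD r; rewrite /Rintegral => ->.
have P1' : fine (P (Theta `*` degs n)) = 1 by rewrite P1.
by rewrite P1' mulr1.
Qed.

Lemma Ex_ext (R : realType) (Theta : set R) n (P : probability (R * nat)%type R) f g :
  (forall z, (Theta `*` degs n) z -> f z = g z) ->
  Ex P Theta n f = Ex P Theta n g.
Proof.
move=> H; rewrite /Ex; congr fine; apply: eq_integral => z /[!inE] Dz.
by rewrite H.
Qed.

Lemma Ex_ge0 (R : realType) (Theta : set R) n (P : probability (R * nat)%type R) f :
  (forall z, (Theta `*` degs n) z -> 0 <= f z) -> 0 <= Ex P Theta n f.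
Proof.
move=> H; rewrite /Ex; apply: fine_ge0; apply: integral_ge0 => z Dz.
by rewrite lee_fin H.
Qed.

Lemma divK' (R : realType) (b c : R) : 0 < c -> b = c * (b / c).
Proof. by move=> c0; rewrite mulrCA divff ?mulr1 // gt_eqF. Qed.
Lemma quad_opt (R : realType) (b c y : R) : 0 < c ->
  b * y - c / 2 * y ^+ 2 <= b * (b / c) - c / 2 * (b / c) ^+ 2.
Proof.
move=> c0; have hb := @divK' R b c c0; move: (b / c) hb => v hb.
rewrite hb -subr_ge0.
have -> : c * v * v - c / 2 * v ^+ 2 - (c * v * y - c / 2 * y ^+ 2) = c / 2 * (y - v) ^+ 2 by field.
by apply: mulr_ge0; [apply: divr_ge0; lra | apply: sqr_ge0].
Qed.
Lemma quad_max (R : realType) (b c v : R) : 0 < c -> 0 <= b / c ->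
  (forall y, 0 <= y -> b * y - c / 2 * y ^+ 2 <= b * v - c / 2 * v ^+ 2) -> v = b / c.
Proof.
move=> c0 h0 H; have := H _ h0; have hb := @divK' R b c c0; move: (b / c) hb => w hb.
rewrite hb => H2.
have h3 : c / 2 * (v - w) ^+ 2 <= 0.
  have -> : c / 2 * (v - w) ^+ 2 = (c * w * w - c / 2 * w ^+ 2) - (c * w * v - c / 2 * v ^+ 2) by field.
  by rewrite subr_le0.
have h4 : (v - w) ^+ 2 <= 0.
  by rewrite -(pmulr_rle0 _ (_ : 0 < c / 2)) //; apply: divr_gt0.
have : (v - w) ^+ 2 == 0 by rewrite eq_le h4 sqr_ge0.
by rewrite sqrf_eq0 subr_eq0 => /eqP.
Qed.

Arguments goodD {R D0 f g}.
Arguments goodM {R D0 f g}.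
Arguments goodC {R D0}.
Arguments goodZ {R D0 f} r.
Arguments good1 {R Theta} n.
Arguments good2 {R Theta} n.
Arguments Ex_add {R Theta n} P {f g}.
Arguments Ex_scale {R Theta n} P {f} r.
Arguments Ex_cst {R Theta n} P r.
Arguments Ex_ext {R Theta n} P {f g}.
Arguments Ex_ge0 {R Theta n} P {f}.
Arguments divK' {R}.
Arguments quad_opt {R}.
Arguments quad_max {R}.

Lemma EU_soc_eq (R : realType) (P : probability (R * nat)%type R) Theta n a c phi y th d x :
  EU_soc P Theta n a c phi y th d x =
  (th + a * d%:R * Ex P Theta n x) * y - c / 2 * y ^+ 2 + phi * (n.-1)%:R * Ex P Theta n x.
Proof. rewrite /EU_soc; ring. Qed.

Lemma EU_friend_eq (R : realType) (P : probability (R * nat)%type R) Theta n a c phi y th d x :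
  EU_friend P Theta n a c phi y th d x =
  (th + a * d%:R * Ext P Theta n x) * y - c / 2 * y ^+ 2 + phi * (n.-1)%:R * Ex P Theta n x.
Proof. rewrite /EU_friend; ring. Qed.

Theorem lemma3 (R : realType) (n : nat) (a c phi : R) (Theta : set R)
  (P : probability (R * nat)%type R) :
  (2 <= n)%N -> 0 < a -> 0 < c ->
  compact Theta -> Theta `<=` [set t | 0 <= t] ->
  P (Theta `*` degs n) = 1%E ->
  (0 < P [set z : R * nat | (0 < z.1)%R])%E ->
  a * Ext P Theta n (fun z => z.2%:R) < c ->
  let Eth := Ex P Theta n (fun z => z.1) in
  let Ed := Ex P Theta n (fun z => z.2%:R) in
  let Etth := Ext P Theta n (fun z => z.1) in
  let Etd := Ext P Theta n (fun z => z.2%:R) in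
  ((exists x, soc_equilibrium P Theta n a c phi x) /\
   (forall x, soc_equilibrium P Theta n a c phi x ->
      forall th d, Theta th -> degs n d ->
        x (th, d) = th / c + a * d%:R * Eth / (c * (c - a * Ed)))) /\
  ((exists x, friend_equilibrium P Theta n a c phi x) /\
   (forall x, friend_equilibrium P Theta n a c phi x ->
      forall th d, Theta th -> degs n d ->
        x (th, d) = th / c + a * d%:R * Etth / (c * (c - a * Etd)))).
Proof.
move=> n2 a0 c0 cT Tpos P1 _ hc Eth Ed Etth Etd.
rewrite /Eth /Ed /Etth /Etd /Ext; clear Eth Ed Etth Etd; rewrite /Ext in hc.
have mT : measurable Theta :=
  measurable_realfun.closed_measurable (compact_closed (@Rhausdorff R) cT).
have mD : measurable (Theta `*` degs n) by apply: measurableX.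
have g1 := good1 n mT cT.
have g2 := good2 n mT.
have g22 := goodM g2 g2.
have g21 := goodM g2 g1.
have Ed1 : 1 <= Ex P Theta n (fun z => z.2%:R).
  have : 0 <= Ex P Theta n (fun z => z.2%:R + (-1)).
    apply: Ex_ge0 => z [_ /andP[h _]]; rewrite subr_ge0 ler1n; exact: h.
  by rewrite (Ex_add P mD g2 (goodC _)) (Ex_cst P _ mD P1) subr_ge0.
have E2ge : (Ex P Theta n (fun z => z.2%:R)) ^+ 2 <= Ex P Theta n (fun z => z.2%:R * z.2%:R).
  have : 0 <= Ex P Theta n (fun z => (z.2%:R - Ex P Theta n (fun z => z.2%:R)) *
                                      (z.2%:R - Ex P Theta n (fun z => z.2%:R))).
    by apply: Ex_ge0 => z _; rewrite -expr2 sqr_ge0.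
  rewrite (Ex_ext P (g := fun z => z.2%:R * z.2%:R + ((-2 * Ex P Theta n (fun z => z.2%:R)) * z.2%:R
             + Ex P Theta n (fun z => z.2%:R) ^+ 2))); last by move=> z _; ring.
  rewrite (Ex_add P mD g22 (goodD (goodZ _ g2) (goodC _))) (Ex_add P mD (goodZ _ g2) (goodC _)).
  rewrite (Ex_scale P _ mD g2) (Ex_cst P _ mD P1).
  move=> h; nra.
have Eth0 : 0 <= Ex P Theta n (fun z => z.1) by apply: Ex_ge0 => z [Tz _]; exact: Tpos.
have Edt0 : 0 <= Ex P Theta n (fun z => z.2%:R * z.1).
  by apply: Ex_ge0 => z [Tz _]; apply: mulr_ge0 => //; exact: Tpos.
have [Ed EdE] : exists m, Ex P Theta n (fun z => z.2%:R) = m by eexists.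
have [Eth EthE] : exists m, Ex P Theta n (fun z => z.1) = m by eexists.
have [E2 E2E] : exists m, Ex P Theta n (fun z => z.2%:R * z.2%:R) = m by eexists.
have [Edt EdtE] : exists m, Ex P Theta n (fun z => z.2%:R * z.1) = m by eexists.
rewrite EdE in Ed1 E2ge; rewrite EthE in Eth0; rewrite E2E in E2ge; rewrite EdtE in Edt0.
rewrite !EdE !EthE !E2E !EdtE; rewrite EdE E2E in hc.
have Ed0 : 0 < Ed by lra.
have hEd : Ed <= E2 / Ed by rewrite ler_pdivlMr // -expr2.
have hcs : a * Ed < c by apply: (le_lt_trans _ hc); rewrite ler_pM2l.

have cE0 : c - a * Ed != 0 by rewrite subr_eq0 gt_eqF.
have cE0' : 0 < c - a * Ed by rewrite subr_gt0.
have c0' : c != 0 by rewrite gt_eqF.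
have Ed0' : Ed != 0 by rewrite gt_eqF.
have cF0' : 0 < c - a * (E2 / Ed) by rewrite subr_gt0.
have cF0 : c - a * (E2 / Ed) != 0 by rewrite gt_eqF.
have cF2 : c * Ed - a * E2 != 0.
  have h : 0 < (c - a * (E2 / Ed)) * Ed := mulr_gt0 cF0' Ed0.
  have e : (c - a * (E2 / Ed)) * Ed = c * Ed - a * E2 by field.
  by rewrite -e gt_eqF.
split; split.
-
  pose xs := fun z : R * nat => z.1 / c + a * z.2%:R * Eth / (c * (c - a * Ed)).
  exists xs.
  have gxs : good (Theta `*` degs n) xs :=
    goodD (goodM g1 (goodC _)) (goodM (goodM (goodM (goodC a) g2) (goodC Eth)) (goodC _)).
  have XE : Ex P Theta n xs = Eth / (c - a * Ed).
    rewrite (Ex_ext P (g := fun z => c^-1 * z.1 + (a * Eth / (c * (c - a * Ed))) * z.2%:R));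
      last by move=> z _; rewrite /xs; ring.
    rewrite (Ex_add P mD (goodZ _ g1) (goodZ _ g2)) (Ex_scale P _ mD g1) (Ex_scale P _ mD g2).
    rewrite EthE EdE; field; rewrite ?cE0 ?c0' //.
  split.
    have [mx [M HM]] := gxs; split => //; first by exists M.
    move=> z [Tz /andP[hd _]]; rewrite /xs; apply: addr_ge0.
      by apply: divr_ge0; [exact: Tpos | exact: ltW].
    apply: divr_ge0; last by apply: mulr_ge0; exact: ltW.
    by apply: mulr_ge0 => //; apply: mulr_ge0 => //; exact: ltW.
  move=> th d Tth Dd y y0; rewrite !EU_soc_eq lerD2r XE.
  have -> : xs (th, d) = (th + a * d%:R * (Eth / (c - a * Ed))) / c.
    by rewrite /xs /=; field; rewrite ?cE0 ?c0'.
  exact: quad_opt.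
-
  move=> x [[mx [M HM] xpos] Hopt] th d Tth Dd.
  have gx : good (Theta `*` degs n) x by split => //; exists M.
  have X0 : 0 <= Ex P Theta n x := Ex_ge0 P xpos.
  have [X XE] : exists X, Ex P Theta n x = X by eexists.
  rewrite XE in X0.
  have xf : forall z, (Theta `*` degs n) z -> x z = (z.1 + a * z.2%:R * X) / c.
    move=> [t k] [Tt Dk]; apply: (quad_max _ _ _ c0).
      apply: divr_ge0; last exact: ltW.
      apply: addr_ge0; first exact: Tpos.
      by apply: mulr_ge0 => //; apply: mulr_ge0 => //; exact: ltW.
    move=> y y0; have := Hopt t k Tt Dk y y0; by rewrite !EU_soc_eq lerD2r XE.
  have h1 : X = c^-1 * Eth + (a * X / c) * Ed.
    rewrite -{1}XE (Ex_ext P (g := fun z => c^-1 * z.1 + (a * X / c) * z.2%:R)); last first.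
      by move=> z Dz; rewrite xf //; ring.
    by rewrite (Ex_add P mD (goodZ _ g1) (goodZ _ g2)) (Ex_scale P _ mD g1) (Ex_scale P _ mD g2) EthE EdE.
  have h2 : Eth = X * (c - a * Ed).
    have e : c * X = Eth + a * X * Ed by rewrite {1}h1; field.
    by rewrite mulrBr [X * c]mulrC e; ring.
  rewrite xf //= h2; field; rewrite ?cE0 ?c0' //.
-
  pose xs := fun z : R * nat => z.1 / c + a * z.2%:R * (Edt / Ed) / (c * (c - a * (E2 / Ed))).
  exists xs.
  have gxs : good (Theta `*` degs n) xs :=
    goodD (goodM g1 (goodC _)) (goodM (goodM (goodM (goodC a) g2) (goodC (Edt / Ed))) (goodC _)).
  have SE : Ex P Theta n (fun z => z.2%:R * xs z) =
     c^-1 * Edt + (a * (Edt / Ed) / (c * (c - a * (E2 / Ed)))) * E2.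
    rewrite (Ex_ext P (g := fun z => c^-1 * (z.2%:R * z.1) +
        (a * (Edt / Ed) / (c * (c - a * (E2 / Ed)))) * (z.2%:R * z.2%:R)));
      last by move=> z _; rewrite /xs; ring.
    rewrite (Ex_add P mD (goodZ _ g21) (goodZ _ g22)) (Ex_scale P _ mD g21) (Ex_scale P _ mD g22).
    by rewrite EdtE E2E.
  split.
    have [mx [M HM]] := gxs; split => //; first by exists M.
    move=> z [Tz /andP[hd _]]; rewrite /xs; apply: addr_ge0.
      by apply: divr_ge0; [exact: Tpos | exact: ltW].
    apply: divr_ge0; last by apply: mulr_ge0; exact: ltW.
    apply: mulr_ge0; last by apply: divr_ge0 => //; exact: ltW.
    by apply: mulr_ge0 => //; exact: ltW.
  move=> th d Tth Dd y y0; rewrite !EU_friend_eq lerD2r /Ext SE EdE.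
  have -> : xs (th, d) = (th + a * d%:R *
     ((c^-1 * Edt + (a * (Edt / Ed) / (c * (c - a * (E2 / Ed)))) * E2) / Ed)) / c.
    rewrite /xs /=; field; rewrite ?cF0 ?c0' ?Ed0' ?cF2 //.
  exact: quad_opt.
-
  move=> x [[mx [M HM] xpos] Hopt] th d Tth Dd.
  have gx : good (Theta `*` degs n) x by split => //; exists M.
  have gdx := goodM g2 gx.
  have S0 : 0 <= Ex P Theta n (fun z => z.2%:R * x z).
    by apply: Ex_ge0 => z Dz; apply: mulr_ge0 => //; exact: xpos.
  have [S SE] : exists S, Ex P Theta n (fun z => z.2%:R * x z) = S by eexists.
  rewrite SE in S0.
  have xf : forall z, (Theta `*` degs n) z -> x z = (z.1 + a * z.2%:R * (S / Ed)) / c.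
    move=> [t k] [Tt Dk]; apply: (quad_max _ _ _ c0).
      apply: divr_ge0; last exact: ltW.
      apply: addr_ge0; first exact: Tpos.
      apply: mulr_ge0; last by apply: divr_ge0 => //; exact: ltW.
      by apply: mulr_ge0 => //; exact: ltW.
    move=> y y0; have := Hopt t k Tt Dk y y0; by rewrite !EU_friend_eq lerD2r /Ext SE EdE.
  have h1 : S = c^-1 * Edt + (a * (S / Ed) / c) * E2.
    rewrite -{1}SE (Ex_ext P (g := fun z => c^-1 * (z.2%:R * z.1) +
        (a * (S / Ed) / c) * (z.2%:R * z.2%:R))); last first.
      by move=> z Dz; rewrite xf //; ring.
    by rewrite (Ex_add P mD (goodZ _ g21) (goodZ _ g22)) (Ex_scale P _ mD g21) (Ex_scale P _ mD g22) EdtE E2E.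
  have h2 : Edt = c * S - a * (S / Ed) * E2.
    by rewrite {1}h1; field; rewrite ?Ed0' ?c0'.
  rewrite xf //= h2; field; rewrite ?cF0 ?c0' ?Ed0' ?cF2 //.
Qed.
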